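(* Let $\theta\in\mathbb{F}_{q^3}^*$. The pencil of lines $T\mathcal S_\theta=\{TX: X\in\mathcal S_\theta\}$ consists entirely of Type II lines if $N(\theta)=1$, and otherwise consists entirely of Type III lines.
   Context: Let $q$ be a prime power, $\mathbb{F}_{q^3}^*=\mathbb{F}_{q^3}\setminus\{0\}$, and $N(x)=x^{q^2+q+1}$ the norm from $\mathbb{F}_{q^3}$ to $\mathbb{F}_q$. Points of $\mathrm{PG}(2,q^3)$ have homogeneous coordinates $(x,y,z)$ and lines $[a,b,c]$. Let $\phi$ be the collineation $(x,y,z)\mapsto(z^q,x^q,y^q)$, acting on lines by $[d,e,f]\mapsto[f^q,d^q,e^q]$, whose fixed points form the subplane $\mathcal P_{2,q}=\{(x,x^q,x^{q^2}):x\in\mathbb{F}_{q^3}^*\}$. A line has Type I, II or III according as its $\phi$-orbit is one line, three concurrent lines, or three non-concurrent lines (equivalently it meets $\mathcal P_{2,q}$ in $q+1$, $1$, or $0$ points). Let $T=(0,0,1)$. For $\theta\in\mathbb{F}_{q^3}^*$ let $\mathcal S_\theta=\{(x\theta,x^q,0):x\in\mathbb{F}_{q^3}^*\}$, a set of points on the line $[0,0,1]$. *)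

(* Defs.v *)
From HB Require Import structures.
From mathcomp Require Import all_boot all_order all_algebra.
Set Implicit Arguments. Unset Strict Implicit. Unset Printing Implicit Defensive.
Import GRing.Theory.
Local Open Scope ring_scope.

(* Homogeneous coordinates over a field F: a triple (x, y, z).
   Points and lines of PG(2,F) are represented by NONZERO triples;
   proportional triples represent the same point/line. *)
Definition triple (F : Type) := (F * F * F)%type.

Section PG.
Variable F : fieldType.

Definition c1 (v : triple F) : F := v.1.1.
Definition c2 (v : triple F) : F := v.1.2.
Definition c3 (v : triple F) : F := v.2.

Definition nonzero3 (v : triple F) : Prop := v <> (0, 0, 0).

Definition incident (p l : triple F) : Prop :=
  c1 l * c1 p + c2 l * c2 p + c3 l * c3 p = 0.

Definition same_proj (l m : triple F) : Prop :=
  exists k : F, k != 0 /\ m = (k * c1 l, k * c2 l, k * c3 l).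

Definition concurrent (l1 l2 l3 : triple F) : Prop :=
  exists p : triple F, nonzero3 p /\ incident p l1 /\ incident p l2 /\ incident p l3.

Variable q : nat.

Definition phiL (l : triple F) : triple F :=
  (c3 l ^+ q, c1 l ^+ q, c2 l ^+ q).

Definition typeI (l : triple F) : Prop := same_proj l (phiL l).
Definition typeII (l : triple F) : Prop :=
  ~ same_proj l (phiL l) /\ concurrent l (phiL l) (phiL (phiL l)).
Definition typeIII (l : triple F) : Prop :=
  ~ same_proj l (phiL l) /\ ~ concurrent l (phiL l) (phiL (phiL l)).

Definition norm3 (x : F) : F := x ^+ (q ^ 2 + q + 1)%N.

End PG.

Definition ptT (F : fieldType) : triple F := (0, 0, 1).
Definition ptS (F : fieldType) (q : nat) (theta x : F) : triple F :=
  (x * theta, x ^+ q, 0).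

(* Main.v *)
Require Import Defs.
From HB Require Import structures.
From mathcomp Require Import all_boot all_order all_algebra.
From mathcomp Require Import finfield.
From mathcomp Require Import ring.
Import GRing.Theory.
Local Open Scope ring_scope.

Lemma normE (F : fieldType) (q : nat) (y : F) :
  norm3 q y = y * y ^+ q * (y ^+ q) ^+ q.
Proof.
rewrite /norm3 -exprM mulnn !exprD expr1.
set u := y ^+ q; set w := y ^+ (q ^ 2).
ring.
Qed.

Lemma normM (F : fieldType) (q : nat) (u v : F) :
  norm3 q (u * v) = norm3 q u * norm3 q v.
Proof. by rewrite /norm3 exprMn. Qed.

Lemma normX (F : finFieldType) (q : nat) (hF : #|F| = (q ^ 3)%N) (x : F) :
  norm3 q (x ^+ q) = norm3 q x.
Proof.
rewrite !normE.
have -> : ((x ^+ q) ^+ q) ^+ q = x.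
  have e3 : (q * q * q = #|F|)%N by rewrite hF !expnS expn0 muln1 mulnA.
  by rewrite -!exprM ?mulnA e3 expf_card.
ring.
Qed.

Lemma normN1 (F : fieldType) (q : nat) : norm3 q (-1 : F) = -1.
Proof.
rewrite /norm3 -signr_odd.
have -> : odd (q ^ 2 + q + 1) = true.
  by rewrite !oddD oddX /=; case: (odd q).
by rewrite expr1.
Qed.

Theorem lemma2p3 (F : finFieldType) (q : nat) (hF : #|F| = (q ^ 3)%N)
  (theta : F) (htheta : theta != 0) :
  (norm3 q theta = 1 ->
     forall x : F, x != 0 -> forall l : triple F, nonzero3 l ->
       incident (ptT F) l -> incident (ptS q theta x) l -> typeII q l) /\
  (norm3 q theta <> 1 ->
     forall x : F, x != 0 -> forall l : triple F, nonzero3 l ->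
       incident (ptT F) l -> incident (ptS q theta x) l -> typeIII q l).
Proof.
have key : forall x : F, x != 0 -> forall l : triple F, nonzero3 l ->
       incident (ptT F) l -> incident (ptS q theta x) l ->
       exists a b, l = (a, b, 0) /\ a != 0 /\ b != 0 /\
         norm3 q a * norm3 q theta = - norm3 q b /\
         ~ same_proj l (phiL q l) /\
         (concurrent l (phiL q l) (phiL q (phiL q l)) <->
            norm3 q a + norm3 q b = 0).
  move=> x hx [[a b] c] hnz hT hS.
  rewrite /incident /ptT /ptS /c1 /c2 /c3 /= in hT hS.
  have c0 : c = 0 by move: hT; rewrite !mulr0 !add0r mulr1.
  subst c.
  have hq : x ^+ q != 0 by rewrite expf_neq0.
  have b0 : b != 0.
    apply/eqP=> b0; subst b; apply: hnz.
    move: hS; rewrite mul0r mulr0 !addr0 => /eqP; rewrite !mulf_eq0 (negPf hx) (negPf htheta) /=.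
    by rewrite orbF => /eqP ->.
  have a0 : a != 0.
    apply/eqP=> a0; subst a; move/eqP: b0; apply.
    move: hS; rewrite mul0r mulr0 !add0r addr0 => /eqP; rewrite mulf_eq0 (negPf hq) orbF.
    by move/eqP.
  have hN : norm3 q a * norm3 q theta = - norm3 q b.
    have e : a * (x * theta) = (-1) * b * x ^+ q.
      by rewrite mulr0 addr0 in hS; apply/eqP; rewrite -subr_eq0; apply/eqP; rewrite -[RHS]hS; ring.
    have := congr1 (norm3 q) e.
    rewrite !normM normX // normN1 => e2.
    have nx : norm3 q x != 0 by rewrite /norm3 expf_neq0.
    apply: (mulIf nx); transitivity (norm3 q a * (norm3 q x * norm3 q theta)); first ring.
    rewrite e2; ring.
  exists a, b; split=> //; split=> //; split=> //; split=> //; split.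
    case=> k [k0]; rewrite /phiL /c1 /c2 /c3 /= => [[_ _]].
    by rewrite mulr0 => /eqP; rewrite expf_eq0 (negPf b0) andbF.
  have z0 : (0 : F) ^+ q = 0.
    rewrite expr0n; case: eqP => // q0; move: (card_finNzRing_gt1 F).
    by rewrite hF q0.
  rewrite /concurrent /phiL /incident /nonzero3 /c1 /c2 /c3 /= !z0.
  split.
    case=> [[[p1 p2] p3]] [pnz] /= [e1 [e2 e3]].
    rewrite ?(mulr0, mul0r, addr0, add0r) in e1 e2 e3.
    have p10 : p1 != 0.
      apply/eqP=> p10; subst p1; apply: pnz.
      have p20 : p2 = 0.
        by move/eqP: e1; rewrite ?(mulr0, mul0r, addr0, add0r) mulf_eq0 (negPf b0) /= => /eqP.
      subst p2.
      have : a ^+ q ^+ q * p3 = 0 by move: e3; rewrite ?(mulr0, mul0r, addr0, add0r).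
      by move/eqP; rewrite mulf_eq0 !expf_eq0 (negPf a0) !andbF /= => /eqP ->.
    apply/eqP; rewrite -(mulIr_eq0 _ (mulIf p10)); apply/eqP.
    rewrite !normE.
    have E1 : a * p1 = - (b * p2) by apply/eqP; rewrite -subr_eq0 opprK e1.
    have E2 : a ^+ q * p2 = - (b ^+ q * p3) by apply/eqP; rewrite -subr_eq0 opprK e2.
    have E3 : b ^+ q ^+ q * p1 = - (a ^+ q ^+ q * p3) by apply/eqP; rewrite -subr_eq0 opprK e3.
    have -> : (a * a ^+ q * a ^+ q ^+ q + b * b ^+ q * b ^+ q ^+ q) * p1 =
       a ^+ q * a ^+ q ^+ q * (a * p1) + b * b ^+ q * (b ^+ q ^+ q * p1) by ring.
    rewrite E1 E3.
    have -> : a ^+ q * a ^+ q ^+ q * - (b * p2) + b * b ^+ q * - (a ^+ q ^+ q * p3)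
       = - (a ^+ q ^+ q * b) * (a ^+ q * p2 + b ^+ q * p3) by ring.
    by rewrite E2 addNr mulr0.
  move=> hsum.
  exists (b * b ^+ q, - (a * b ^+ q), a * a ^+ q); split.
    case=> _ _ /eqP; rewrite mulf_eq0 expf_eq0 (negPf a0) andbF /=.
    by apply/negP.
  split; first by rewrite /=; ring.
  split; first by rewrite /=; ring.
  rewrite /= -[RHS]hsum !normE; ring.
split.
  move=> h1 x hx l hl hT hS.
  have [a [b [_ [a0 [b0 [hN [hI hC]]]]]]] := key x hx l hl hT hS.
  split=> //; apply/hC; by rewrite -[norm3 q b]opprK -hN h1 mulr1 subrr.
move=> h1 x hx l hl hT hS.
have [a [b [_ [a0 [b0 [hN [hI hC]]]]]]] := key x hx l hl hT hS.
split=> // /hC /eqP; rewrite addr_eq0 => /eqP e; apply: h1.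
have na : norm3 q a != 0 by rewrite /norm3 expf_neq0.
apply: (mulfI na); rewrite hN mulr1 e.
reflexivity.
Qed.
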